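(* Let $d\ge2$ and let $N_1,\dots,N_d$ be positive integers. With $\mathbf{N}=(N_1,\dots,N_d)$ and $\mathbf{N}'=(N_1,\dots,N_{d-1})$, \[ \operatorname{disc}(\mathcal{A}_{\mathbf{N}})\le\max\Big(\operatorname{disc}(\mathcal{A}_{\mathbf{N}'}),\sqrt{6N_d\log(2N_1\cdots N_d)}\Big). \]
   Context: $[N]=\{1,\dots,N\}$; $\log$ is the natural logarithm. An arithmetic progression in $k$ dimensions is a set $\{\mathbf{a}+i\mathbf{b}: i=0,\dots,l-1\}$ with $\mathbf{a},\mathbf{b}\in\mathbb{Z}^k$, $\mathbf{b}\ne\mathbf{0}$, $l\in\mathbb{N}$. For $\mathbf{M}=(M_1,\dots,M_k)$, $\mathcal{A}_{\mathbf{M}}$ is the family of arithmetic progressions in $k$ dimensions contained in $\Omega=[M_1]\times\cdots\times[M_k]$, and $\operatorname{disc}(\mathcal{A}_{\mathbf{M}})=\min_{\chi:\Omega\to\{1,-1\}}\max_{A\in\mathcal{A}_{\mathbf{M}}}|\sum_{x\in A}\chi(x)|$. *)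

(* Defs.v *)
From HB Require Import structures.
From mathcomp Require Import all_boot all_order all_algebra.
From mathcomp Require Import boolp.
Set Implicit Arguments. Unset Strict Implicit. Unset Printing Implicit Defensive.
Import Order.TTheory GRing.Theory Num.Theory.
Local Open Scope ring_scope.

(* The box Omega = [M_1] x ... x [M_k], with k = size M and M_i = nth 0 M i.
   A point x is stored as a dependent finite function; its i-th coordinate
   is the integer (x i) + 1 in {1, ..., M_i}. *)
Definition pt (M : seq nat) := {dffun forall i : 'I_(size M), 'I_(nth 0%N M i)}.

Definition coord (M : seq nat) (x : pt M) (j : 'I_(size M)) : int :=
  ((x j : nat)%:Z + 1)%R.

Definition isAP (M : seq nat) (A : {set pt M}) : Prop :=
  exists (a b : 'I_(size M) -> int) (l : nat),
    (exists j, b j != 0) /\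
    (forall i : nat, (i < l)%N ->
        exists x : pt M, forall j, coord x j = a j + i%:Z * b j) /\
    (forall x : pt M, x \in A <->
        exists2 i : nat, (i < l)%N & forall j, coord x j = a j + i%:Z * b j).

Definition col_sum (M : seq nat) (chi : {ffun pt M -> bool}) (A : {set pt M}) : int :=
  \sum_(x in A) (if chi x then 1 else -1).

Definition max_disc (M : seq nat) (chi : {ffun pt M -> bool}) : nat :=
  \max_(A : {set pt M} | `[< isAP A >]) absz (col_sum chi A).

Definition disc (M : seq nat) : nat :=
  max_disc [arg min_(chi < [ffun=> true] : {ffun pt M -> bool}) max_disc chi].

(* Main.v *)
Require Import Defs.
From HB Require Import structures.
From mathcomp Require Import all_boot all_order all_algebra.
From mathcomp Require Import all_classical all_reals exp.
From mathcomp Require Import topology normedtype sequences.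
From mathcomp Require Import zify ring lra.
Import Order.TTheory GRing.Theory Num.Theory.
Local Open Scope ring_scope.
Import numFieldNormedType.Exports.
Set Implicit Arguments. Unset Strict Implicit. Unset Printing Implicit Defensive.
Lemma fact_ineq m : (2^m * m`! <= (m.*2)`!)%N.
Proof.
elim: m => [//|m IH].
rewrite doubleS !factS expnS.
have H1 : (2 * m.+1 <= m.*2.+2 * m.*2.+1)%N by nia.
have := leq_mul H1 IH. 
have -> : (2 * 2 ^ m * (m.+1 * m`!) = 2 * m.+1 * (2 ^ m * m`!))%N by ring.
move=> H; apply: (leq_trans H); rewrite !mulnA leqnn //.
Qed.

Section Cosh.
Context {R : realType}.
Implicit Types x : R.

Lemma term_ge0 x i : 0 <= exp_coeff x i + exp_coeff (-x) i.
Proof.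
rewrite /exp_coeff /= exprNn -mulrDl -{1}(mul1r (x ^+ i)) -mulrDl.
rewrite -signr_odd; case Ho: (odd i); rewrite /= ?expr1 ?expr0 ?subrr ?mul0r//.
apply: divr_ge0 => //; apply: mulr_ge0; first by rewrite addr_ge0.
have -> : i = (2 * i./2)%N by rewrite mul2n -[i in LHS]odd_double_half Ho.
by rewrite exprM; apply: exprn_ge0; apply: sqr_ge0.
Qed.

Lemma part_ineq x m : series (exp_coeff x) (m.*2) + series (exp_coeff (-x)) (m.*2)
   <= series (exp_coeff (x ^+ 2 / 2)) m *+ 2.
Proof.
elim: m => [|m IH]; first by rewrite /series /= !big_nil addr0 mul0rn.
rewrite doubleS /series /= !big_nat_recr //= -!/(series _ _).
rewrite mulrnDl.
have E : forall c d e f g h : R, c + d + e + (f + g + h) = (c + f) + (d + g) + (e + h) by move=> *; ring.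
rewrite E.
have -> : exp_coeff x m.*2.+1 + exp_coeff (-x) m.*2.+1 = 0.
  rewrite /exp_coeff /= exprNn -signr_odd /= odd_double /= expr1 mulN1r.
  by rewrite mulNr subrr.
rewrite addr0; apply: lerD => //.
rewrite /exp_coeff /= exprNn -signr_odd /= odd_double /= expr0 mul1r.
rewrite -mul2n exprM expr_div_n -exprM.
have y0 : 0 <= x ^+ (2 * m) by rewrite exprM; apply: exprn_ge0; apply: sqr_ge0.
rewrite -mulr2n lerMn2r /=.
rewrite -mulrA; apply: ler_wpM2l => //.
rewrite -invfM -natrX -natrM. rewrite lef_pV2 ?posrE ?ltr0n ?fact_gt0 ?muln_gt0 ?expn_gt0 //.
  by rewrite ler_nat mul2n fact_ineq.
by rewrite fact_gt0.
Qed.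
End Cosh.

Section Cosh2.
Local Open Scope classical_set_scope.
Context {R : realType}.
Implicit Types x : R.

Lemma u_mono x n : series (exp_coeff x) n + series (exp_coeff (-x)) n <=
  series (exp_coeff x) (n.*2) + series (exp_coeff (-x)) (n.*2).
Proof.
rewrite /series /= (@big_cat_nat _ _ _ n 0 n.*2) //; last by rewrite -addnn leq_addl.
rewrite (@big_cat_nat _ _ _ n 0 n.*2 _ (exp_coeff (-x))) //; last by rewrite -addnn leq_addl.
have E : forall a b c d : R, a + b + (c + d) = (a + c) + (b + d) by move=> *; ring.
rewrite E lerDl -big_split /=; apply: sumr_ge0 => i _; exact: term_ge0.
Qed.

Lemma cosh_le x : expR x + expR (- x) <= expR (x ^+ 2 / 2) *+ 2.
Proof.
have c1 : series (exp_coeff x) @ \oo --> expR x := is_cvg_series_exp_coeff x.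
have c2 : series (exp_coeff (-x)) @ \oo --> expR (-x) := is_cvg_series_exp_coeff (-x).
have c3 : series (exp_coeff (x ^+ 2 / 2)) @ \oo --> expR (x ^+ 2 / 2) := is_cvg_series_exp_coeff _.
have := ler_cvg_to (cvgD c1 c2) (@cvgMn _ _ _ _ _ _ 2 _ c3). move=> H; apply: H.
near=> n => /=.
apply: (le_trans (u_mono x n)); exact: part_ineq.
Unshelve. all: by end_near.
Qed.
End Cosh2.

Definition sgb {R : realType} (b : bool) : R := if b then 1 else -1.

Lemma mgf_bound {R : realType} (K : nat) (c : 'I_K -> R) (l : R) :
  (forall j, `|c j| <= 1) ->
  \sum_(e : {ffun 'I_K -> bool}) expR (l * \sum_j c j * sgb (e j))
    <= (expR (l ^+ 2 / 2) *+ 2) ^+ K.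
Proof.
move=> hc.
under eq_bigr => e _ do rewrite mulr_sumr expR_sum.
rewrite -(bigA_distr_bigA (fun j b => expR (l * (c j * sgb b)))) /=.
rewrite -[K in X in _ <= X]card_ord -prodr_const.
apply: ler_prod => j _; apply/andP; split.
  by apply: sumr_ge0 => b _; exact: expR_ge0.
have -> : \sum_(b : bool) expR (l * (c j * sgb b)) = expR (l * c j) + expR (- (l * c j)).
  rewrite big_bool /sgb /= mulr1 mulrN1 mulrN addrC //.
apply: (le_trans (cosh_le _)); rewrite lerMn2r /=.
rewrite ler_expR ler_pM2r; last by rewrite invr_gt0.
have /andP[h1 h2] : -1 <= c j <= 1 by rewrite -ler_norml hc.
have h3 : 0 <= l ^+ 2 by apply: sqr_ge0.
have -> : (l * c j) ^+ 2 = l ^+ 2 * (c j) ^+ 2 by ring.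
apply: ler_piMr => //; nra.
Qed.

Lemma tail_bound {R : realType} (K : nat) (c : 'I_K -> R) (t : R) :
  (0 < K)%N -> (forall j, `|c j| <= 1) -> 0 <= t ->
  (#|[set e : {ffun 'I_K -> bool} | t < \sum_j c j * sgb (e j)]|)%:R
    <= 2 ^+ K * expR (- (t ^+ 2) / (2 * K%:R)).
Proof.
move=> K0 hc t0.
set A := [set e : {ffun 'I_K -> bool} | _].
pose l := t / K%:R.
have Kp : (0 : R) < K%:R by rewrite ltr0n.
have l0 : 0 <= l by rewrite divr_ge0 // ltW.
have H1 : #|A|%:R * expR (l * t) <=
    \sum_(e : {ffun 'I_K -> bool}) expR (l * \sum_j c j * sgb (e j)).
  rewrite mulr_natl -sumr_const.
  rewrite [X in _ <= X](bigID (mem A)) /=.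
  apply: (@le_trans _ _ (\sum_(e in A) expR (l * \sum_j c j * sgb (e j)))).
    apply: ler_sum => e; rewrite inE => /ltW het.
    by rewrite ler_expR ler_wpM2l.
  by rewrite lerDl; apply: sumr_ge0 => e _; exact: expR_ge0.
have H2 := le_trans H1 (@mgf_bound R K c l hc).
rewrite exprMn_n -expRM_natl in H2.
have -> : - t ^+ 2 / (2 * K%:R) = K%:R * (l ^+ 2 / 2) - l * t.
  rewrite /l; field; by rewrite lt0r_neq0.
rewrite expRB mulrA ler_pdivlMr ?expR_gt0 //.
by rewrite -[X in _ <= X]mulr_natl natrX in H2.
Qed.

Lemma tail_abs {R : realType} (K : nat) (c : 'I_K -> R) (t : R) :
  (0 < K)%N -> (forall j, `|c j| <= 1) -> 0 <= t ->
  (#|[set e : {ffun 'I_K -> bool} | t < `|\sum_j c j * sgb (e j)|]|)%:R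
    <= 2 * 2 ^+ K * expR (- (t ^+ 2) / (2 * K%:R)).
Proof.
move=> K0 hc t0.
have hc' : forall j, `|(- c) j| <= 1 by move=> j; rewrite /= normrN hc.
have := @tail_bound R K c t K0 hc t0; have := @tail_bound R K (- c) t K0 hc' t0.
set Ap := [set e | t < \sum_j c j * _]; set An := [set e | t < \sum_j (- c) j * _].
move=> hn hp.
have sub : [set e : {ffun 'I_K -> bool} | t < `|\sum_j c j * sgb (e j)|] \subset Ap :|: An.
  apply/fintype.subsetP => e; rewrite !inE.
  have -> : \sum_j (- c) j * sgb (e j) = - \sum_j c j * sgb (e j).
    by rewrite -sumrN; apply: eq_bigr => j _; rewrite /= mulNr.
  by rewrite ltr_normr orbC.
apply: (le_trans (y := (#|Ap| + #|An|)%:R)).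
  rewrite ler_nat; apply: (leq_trans (subset_leq_card sub)).
  by rewrite cardsU leq_subr.
by rewrite natrD -mulrA mulr2n mulrDl !mul1r lerD.
Qed.

Lemma card_pt (N : seq nat) : #|pt N| = (\prod_(n <- N) n)%N.
Proof.
rewrite /pt card_dep_ffun foldrE big_map big_enum /=.
rewrite (big_nth 0%N) big_mkord; apply: eq_bigr => i _; by rewrite card_ord.
Qed.

Lemma pt_eq (M : seq nat) (x y : pt M) : (forall j, Defs.coord x j = Defs.coord y j) -> x = y.
Proof.
move=> h; apply/ffunP => j; apply: val_inj => /=.
by have := h j; rewrite /Defs.coord => /addIr [].
Qed.

Lemma coord_bounds (M : seq nat) (x : pt M) j : 1 <= Defs.coord x j <= (nth 0%N M j)%:Z.
Proof. rewrite /Defs.coord; have := ltn_ord (x j); lia. Qed.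

Definition Np (N : seq nat) := take (size N).-1 N.

Lemma size_Np N : size (Np N) = (size N).-1.
Proof. by rewrite /Np size_takel // leq_pred. Qed.

Lemma Np_le N : (size (Np N) <= size N)%N.
Proof. by rewrite size_Np leq_pred. Qed.

Definition wd N (i : 'I_(size (Np N))) : 'I_(size N) := widen_ord (Np_le N) i.

Lemma nth_Np N (i : 'I_(size (Np N))) : nth 0%N (Np N) i = nth 0%N N i.
Proof. case: i => /= m; rewrite size_Np => hm; by rewrite /Np nth_take. Qed.

Lemma proj_proof N (x : pt N) (i : 'I_(size (Np N))) : (x (wd i) < nth 0%N (Np N) i)%N.
Proof. rewrite nth_Np; exact: (ltn_ord (x (wd i))). Qed.

Definition proj N (x : pt N) : pt (Np N) :=
  @finfun _ (fun i : 'I_(size (Np N)) => 'I_(nth 0%N (Np N) i)) (fun i => Ordinal (proj_proof x i)).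

Lemma coord_proj N (x : pt N) i : Defs.coord (proj x) i = Defs.coord x (wd i).
Proof. by rewrite /Defs.coord /proj ffunE. Qed.

Lemma split_coord N (ld : 'I_(size N)) (hld : val ld = (size N).-1) (j : 'I_(size N)) :
  j = ld \/ exists j' : 'I_(size (Np N)), j = wd j'.
Proof.
case: (eqVneq j ld) => [->|ne]; first by left.
right.
have hj : (nat_of_ord j < size (Np N))%N.
  rewrite size_Np; have := ltn_ord j; have hld' : nat_of_ord ld = (size N).-1 := hld.
  have : nat_of_ord j <> nat_of_ord ld by move=> h; move/eqP: ne; apply; apply: val_inj.
  lia.
exists (Ordinal hj); apply: val_inj => //.
Qed.

Lemma proj_inj N (ld : 'I_(size N)) (hld : val ld = (size N).-1) (x y : pt N) :
  proj x = proj y -> x ld = y ld -> x = y.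
Proof.
move=> hp hl; apply: pt_eq => j.
case: (split_coord hld j) => [->|[j' ->]]; first by rewrite /Defs.coord hl.
by rewrite -!coord_proj hp.
Qed.

Definition sgi (b : bool) : int := if b then 1 else -1.

Definition chi N (ld : 'I_(size N)) (c0 : {ffun pt (Np N) -> bool})
  (e : {ffun 'I_(nth 0%N N ld) -> bool}) : {ffun pt N -> bool} :=
  [ffun x => c0 (proj x) == e (x ld)].

Lemma col_sum_chi N ld c0 e (A : {set pt N}) :
  col_sum (@chi N ld c0 e) A = \sum_(x in A) sgi (c0 (proj x)) * sgi (e (x ld)).
Proof.
apply: eq_bigr => x _; rewrite /chi ffunE /sgi.
by case: (c0 _); case: (e _).
Qed.

Lemma coord_inj1 (M : seq nat) (x y : pt M) j : Defs.coord x j = Defs.coord y j -> x j = y j.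
Proof. by rewrite /Defs.coord => /addIr [] /val_inj. Qed.

Lemma absz_sgi b : absz (sgi b) = 1%N.
Proof. by case: b. Qed.

Lemma slice_case N (ld : 'I_(size N)) (hld : val ld = (size N).-1) c0 e (A : {set pt N})
  (a b : 'I_(size N) -> int) (l : nat) :
  b ld = 0 -> (exists j, b j != 0) ->
  (forall i : nat, (i < l)%N -> exists x : pt N, forall j, Defs.coord x j = a j + i%:Z * b j) ->
  (forall x : pt N, x \in A <-> exists2 i : nat, (i < l)%N & forall j, Defs.coord x j = a j + i%:Z * b j) ->
  (absz (col_sum (@chi N ld c0 e) A) <= max_disc c0)%N.
Proof.
move=> bld [j0 bj0] pts hmem.
case: (posnP l) => [l0|lpos].
  rewrite /col_sum big1 // => x /hmem [i]; by rewrite l0 ltn0.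
have [x0 hx0] := pts 0%N lpos.
have hA : forall x, x \in A -> x ld = x0 ld.
  move=> x /hmem [i _ hi]; apply: coord_inj1; by rewrite hi hx0 bld !mulr0.
have inj : {in A &, injective (@proj N)}.
  move=> x y xA yA hp; apply: (proj_inj hld hp); by rewrite (hA x xA) (hA y yA).
rewrite col_sum_chi.
rewrite (eq_bigr (fun x => sgi (c0 (proj x)) * sgi (e (x0 ld)))); last first.
  by move=> x xA; rewrite (hA x xA).
rewrite -mulr_suml -(big_imset (fun y => sgi (c0 y)) inj) abszM absz_sgi muln1.
apply: (@leq_bigmax_cond _ (fun A => `[< isAP A >]) (fun A => absz (col_sum c0 A))).
apply/asboolP.
exists (fun j' => a (wd j')), (fun j' => b (wd j')), l; split; [|split].
- case: (split_coord hld j0) => [ej|[j' ej]]; first by move: bj0; rewrite ej bld eqxx.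
  by exists j'; rewrite -ej.
- move=> i il; have [x hx] := pts i il; exists (proj x) => j'.
  by rewrite coord_proj hx.
- move=> y; split.
    case/imsetP => x xA ->; have [i il hi] := (hmem x).1 xA.
    by exists i => // j'; rewrite coord_proj hi.
  case=> i il hi; have [x hx] := pts i il.
  have xA : x \in A by apply/hmem; exists i.
  have -> : y = proj x by apply: pt_eq => j'; rewrite hi coord_proj hx.
  exact: imset_f.
Qed.

Definition Aset N (x0 x1 : pt N) (k : nat) : {set pt N} :=
  [set x | [exists i : 'I_k, [forall j, Defs.coord x j ==
       Defs.coord x0 j + (i : nat)%:Z * (Defs.coord x1 j - Defs.coord x0 j)]]].

Definition injb N (ld : 'I_(size N)) (A : {set pt N}) : bool :=
  [forall x in A, forall y in A, (x ld == y ld) ==> (x == y)].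

Lemma ap_struct N (ld : 'I_(size N)) (A : {set pt N})
  (a b : 'I_(size N) -> int) (l : nat) :
  b ld != 0 ->
  (forall i : nat, (i < l)%N -> exists x : pt N, forall j, Defs.coord x j = a j + i%:Z * b j) ->
  (forall x : pt N, x \in A <-> exists2 i : nat, (i < l)%N & forall j, Defs.coord x j = a j + i%:Z * b j) ->
  (0 < l)%N ->
  exists x0 x1 : pt N, [/\ (l <= nth 0%N N ld)%N, A = Aset x0 x1 l & injb ld A].
Proof.
move=> bld pts hmem lpos.
have [x0 hx0] := pts 0%N lpos.
have [x1 hx1] : exists x1 : pt N, forall i : nat, (i < l)%N -> forall j,
    Defs.coord x0 j + i%:Z * (Defs.coord x1 j - Defs.coord x0 j) = a j + i%:Z * b j.
  case: (ltnP 1 l) => [l1|l1].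
    have [x1 hx1] := pts 1%N l1; exists x1 => i il j.
    by rewrite hx0 hx1; ring.
  exists x0 => i il j; have -> : i = 0%N by lia.
  by rewrite hx0; ring.
exists x0, x1; split.
- have [xl hxl] := pts l.-1 ltac:(lia).
  have := coord_bounds x0 ld; have := coord_bounds xl ld.
  rewrite hx0 hxl mul0r addr0.
  have : b ld <> 0 by move=> h; move: bld; rewrite h eqxx.
  move: (b ld) (a ld) => bb aa.
  have : (l.-1)%:Z = l%:Z - 1 by lia.
  move=> -> *; nia.
- apply/setP => x; rewrite inE; apply/idP/idP.
    move=> /hmem [i il hi]; apply/existsP; exists (Ordinal il).
    by apply/forallP => j /=; rewrite hx1 // hi.
  case/existsP => i /forallP hi; apply/hmem; exists i => // j.
  by rewrite (eqP (hi j)) hx1.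
- apply/forallP => x; apply/implyP => xA; apply/forallP => y; apply/implyP => yA.
  apply/implyP => /eqP exy.
  have [i il hi] := (hmem x).1 xA; have [i' il' hi'] := (hmem y).1 yA.
  have cxy : Defs.coord x ld = Defs.coord y ld by rewrite /Defs.coord exy.
  rewrite hi hi' in cxy.
  have ii : i = i'.
    have : b ld <> 0 by move=> h; move: bld; rewrite h eqxx.
    move: cxy; move: (b ld) (a ld) => bb aa; nia.
  apply/eqP; apply: pt_eq => j; by rewrite hi hi' ii.
Qed.

Definition SR {R : realType} N (ld : 'I_(size N)) (c0 : {ffun pt (Np N) -> bool})
  (e : {ffun 'I_(nth 0%N N ld) -> bool}) (A : {set pt N}) : R :=
  \sum_(x in A) sgb (c0 (proj x)) * sgb (e (x ld)).

Lemma col_sum_SR {R : realType} N (ld : 'I_(size N)) c0 e (A : {set pt N}) :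
  ((col_sum (@chi N ld c0 e) A)%:~R : R) = SR c0 e A.
Proof.
rewrite col_sum_chi rmorph_sum /=; apply: eq_bigr => x _.
by case: (c0 _); case: (e _); rewrite /sgi /sgb /= ?mulrN ?mulNr ?mulr1 ?opprK ?rmorphN ?rmorph1.
Qed.

Lemma SR_decomp {R : realType} N (ld : 'I_(size N)) c0 e (A : {set pt N}) :
  SR c0 e A = \sum_(j : 'I_(nth 0%N N ld)) 
     (\sum_(x in A | x ld == j) (sgb (c0 (proj x)) : R)) * sgb (e j).
Proof.
rewrite /SR (partition_big (fun x : pt N => x ld) xpredT) //=.
apply: eq_bigr => j _; rewrite mulr_suml; apply: eq_bigr => x /andP[_ /eqP ->].
by [].
Qed.

Lemma cc_bound {R : realType} N (ld : 'I_(size N)) (c0 : {ffun pt (Np N) -> bool}) (A : {set pt N}) j :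
  injb ld A -> `|\sum_(x in A | x ld == j :> 'I_(nth 0%N N ld)) (sgb (c0 (proj x)) : R)| <= 1.
Proof.
move=> hinj.
apply: (le_trans (ler_norm_sum _ _ _)).
rewrite (eq_bigr (fun=> 1)); last by move=> x _; rewrite /sgb; case: (c0 _); rewrite ?normrN normr1.
rewrite sumr_const -[X in _ <= X](mulr1n 1) ler_pMn2l ?ltr01 //.
apply/card_le1_eqP => x y; rewrite !unfold_in /= => /andP[xA /eqP xj] /andP[yA /eqP yj].
move/forallP/(_ x)/implyP/(_ xA)/forallP/(_ y)/implyP/(_ yA)/implyP: hinj.
by rewrite xj yj eqxx => /(_ isT) /eqP ->.
Qed.

Lemma bad_count {R : realType} N (ld : 'I_(size N)) c0 (A : {set pt N}) (t : R) :
  (0 < nth 0%N N ld)%N -> 0 <= t ->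
  (#|[set e : {ffun 'I_(nth 0%N N ld) -> bool} | injb ld A && (t < `|SR c0 e A|)]|)%:R
    <= 2 * 2 ^+ (nth 0%N N ld) * expR (- (t ^+ 2) / (2 * (nth 0%N N ld)%:R)).
Proof.
move=> K0 t0.
case hi: (injb ld A); last first.
  rewrite (_ : [set e | _] = finset.set0); last by apply/setP => e; rewrite !inE.
  rewrite cards0 mulr0n; apply: mulr_ge0; last exact: expR_ge0.
  by apply: mulr_ge0 => //; apply: exprn_ge0.
pose c := fun j : 'I_(nth 0%N N ld) => \sum_(x in A | x ld == j) (sgb (c0 (proj x)) : R).
have hc : forall j, `|c j| <= 1 by move=> j; exact: cc_bound.
apply: le_trans (tail_abs K0 hc t0).
rewrite ler_nat; apply: subset_leq_card; apply/fintype.subsetP => e.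
by rewrite !inE /= SR_decomp.
Qed.

Lemma exists_good {R : realType} N (ld : 'I_(size N)) c0 (t : R) :
  (0 < nth 0%N N ld)%N -> 0 <= t ->
  ((#|pt N| ^ 2 * (nth 0%N N ld).+1)%N%:R *
     (2 * 2 ^+ (nth 0%N N ld) * expR (- (t ^+ 2) / (2 * (nth 0%N N ld)%:R)))
     < 2 ^+ (nth 0%N N ld)) ->
  exists e : {ffun 'I_(nth 0%N N ld) -> bool}, forall (x0 x1 : pt N) (k : 'I_(nth 0%N N ld).+1),
    ~~ (injb ld (Aset x0 x1 k) && (t < `|SR c0 e (Aset x0 x1 k)|)).
Proof.
move=> K0 t0 hlt.
set K := nth 0%N N ld in K0 hlt *.
pose T := (pt N * pt N * 'I_K.+1)%type.
pose bad (tau : T) (e : {ffun 'I_K -> bool}) :=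
  injb ld (Aset tau.1.1 tau.1.2 tau.2) && (t < `|SR c0 e (Aset tau.1.1 tau.1.2 tau.2)|).
case: (boolP [exists e, [forall tau : T, ~~ bad tau e]]) => [/existsP [e /forallP h]|hno].
  by exists e => x0 x1 k; exact: (h (x0, x1, k)).
exfalso; move: hlt; apply/negP; rewrite -leNgt.
set B := (2 * _ * _).
have step1 : (2 ^+ K : R) <= \sum_(e : {ffun 'I_K -> bool}) \sum_(tau : T) (if bad tau e then 1 else 0).
  have -> : (2 ^+ K : R) = \sum_(e : {ffun 'I_K -> bool}) 1.
    by rewrite sumr_const card_ffun card_bool card_ord natrX.
  apply: ler_sum => e _.
  move/existsPn: hno => /(_ e) /forallPn [tau]; rewrite negbK => btau.
  rewrite (bigD1 tau) //= btau lerDl; apply: sumr_ge0 => i _; by case: (bad i e).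
apply: (le_trans step1); rewrite exchange_big /=.
have step2 : forall tau : T, \sum_(e : {ffun 'I_K -> bool}) (if bad tau e then 1 else 0) <= B.
  move=> tau; rewrite -big_mkcond /= sumr_const.
  apply: le_trans (bad_count c0 (Aset tau.1.1 tau.1.2 tau.2) K0 t0).
  rewrite ler_nat; apply: subset_leq_card; apply/fintype.subsetP => e; by rewrite !inE.
apply: (le_trans (ler_sum _ (fun tau _ => step2 tau))).
rewrite sumr_const card_prod card_prod card_ord.
by rewrite [X in _ <= X]mulr_natl expnS expn1.
Qed.

Lemma numeric {R : realType} (K P : nat) : (0 < K)%N -> (K <= P)%N ->
  ((P ^ 2 * K.+1)%N%:R * (2 * 2 ^+ K * expR (- ((Num.sqrt (6 * K%:R * ln (2 * P%:R)) : R) ^+ 2) / (2 * K%:R))) < 2 ^+ K).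
Proof.
move=> K0 KP.
have P0 : (0 < P)%N by lia.
have kp : (0 : R) < K%:R by rewrite ltr0n.
have pp : (0 : R) < P%:R by rewrite ltr0n.
have L0 : 0 <= ln (2 * P%:R : R).
  apply: ln_ge0; have : (1 : R) <= P%:R by rewrite ler1n.
  lra.
have -> : (Num.sqrt (6 * K%:R * ln (2 * P%:R)) : R) ^+ 2 = 6 * K%:R * ln (2 * P%:R).
  by rewrite sqr_sqrtr // mulr_ge0 // mulr_ge0 // ler0n.
have -> : - (6 * K%:R * ln (2 * P%:R)) / (2 * K%:R) = - (3%:R * ln (2 * P%:R : R)).
  by field; rewrite lt0r_neq0.
rewrite expRN expRM_natl lnK; last by rewrite posrE mulr_gt0.
have q0 : (0 : R) < 2 ^+ K by rewrite exprn_gt0.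
have -> : ((P ^ 2 * K.+1)%N%:R : R) * (2 * 2 ^+ K * ((2 * P%:R) ^+ 3)^-1)
   = 2 ^+ K * ((K%:R + 1) / (4 * P%:R)).
  rewrite natrM natrX -addn1 natrD; field; by rewrite lt0r_neq0.
rewrite gtr_pMr // ltr_pdivrMr; last by rewrite mulr_gt0.
have : (K%:R : R) <= P%:R by rewrite ler_nat.
have : (1 : R) <= K%:R by rewrite ler1n.
lra.
Qed.

Unset Implicit Arguments.

Theorem lemma6p1 (R : realType) (N : seq nat) :
  (2 <= size N)%N -> all (fun n => 0 < n)%N N ->
  ((disc N)%:R : R) <=
    Num.max (disc (take (size N).-1 N))%:R
      (Num.sqrt (6 * (last 0%N N)%:R * ln (2 * (\prod_(n <- N) n)%:R))).
Proof.
move=> h2 hpos.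
have hl : ((size N).-1 < size N)%N by lia.
pose ld := Ordinal hl.
have hld : val ld = (size N).-1 by [].
have hK : last 0%N N = nth 0%N N ld by rewrite /= nth_last.
rewrite hK.
have K0 : (0 < nth 0%N N ld)%N := (allP hpos) _ (mem_nth 0%N hl).
have KP : (nth 0%N N ld <= \prod_(n <- N) n)%N.
  rewrite (big_rem (nth 0%N N ld)) ?mem_nth //=.
  apply: leq_pmulr; rewrite big_seq; apply: prodn_cond_gt0 => i /mem_rem iN.
  exact: (allP hpos) i iN.
set K := nth 0%N N ld in K0 KP *.
set P := \prod_(n <- N) n in KP *.
pose c0 := [arg min_(chi < [ffun=> true] : {ffun pt (Np N) -> bool}) max_disc chi].
have hd' : disc (take (size N).-1 N) = max_disc c0 by [].
set t := Num.sqrt _.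
have t0 : 0 <= t by apply: sqrtr_ge0.
have hnum := @numeric R K P K0 KP.
have [e he] : exists e : {ffun 'I_K -> bool}, forall (x0 x1 : pt N) (k : 'I_K.+1),
    ~~ (injb ld (Aset x0 x1 k) && (t < `|SR c0 e (Aset x0 x1 k)|)).
  apply: exists_good => //; by rewrite card_pt.
pose ch := chi c0 e.
have hdisc : (disc N <= max_disc ch)%N.
  rewrite /disc; case: (@arg_minnP _ [ffun=> true] (fun _ => true) (@max_disc N) isT).
  by move=> c _ hmin; apply: hmin.
apply: (le_trans (y := (max_disc ch)%:R)); first by rewrite ler_nat.
rewrite /max_disc.
apply: (big_ind (fun n : nat => (n%:R : R) <= Num.max (disc (take (size N).-1 N))%:R t)).
- by rewrite le_max ler0n.
- by move=> x y hx hy; rewrite /maxn; case: ifP.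
move=> A /asboolP [a [b [l [hb [pts hmem]]]]].
case: (eqVneq (b ld) 0) => bld.
  have h := slice_case hld c0 e bld hb pts hmem.
  rewrite le_max; apply/orP; left; rewrite hd' ler_nat; exact: h.
case: (posnP l) => [l0|lpos].
  rewrite /col_sum big1 ?le_max ?ler0n //.
  move=> x /hmem [i]; by rewrite l0 ltn0.
have [x0 [x1 [lK eA inj]]] := ap_struct bld pts hmem lpos.
have := he x0 x1 (Ordinal (lK : (l < K.+1)%N)); rewrite /= -eA inj /= -leNgt => hle.
rewrite le_max; apply/orP; right.
by rewrite natr_absz /ch intr_norm col_sum_SR.
Qed.
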